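(* Let $I^\bullet$ be a bounded complex of free modules in $\mathcal{M}_\Lambda$ with $F_0I^\bullet=0$. Then for any bounded complex $K^\bullet$ of modules in $\mathcal{M}_\Lambda$, the maps induced by the inclusion $\sigma K^\bullet\hookrightarrow K^\bullet$, $$\mathrm{Hom}_{\mathbf{C}(\Lambda)}(K^\bullet,I^\bullet)\to\mathrm{Hom}_{\mathbf{C}(\Lambda)}(\sigma K^\bullet,I^\bullet)\quad\text{and}\quad \mathrm{Hom}_{\mathbf{K}(\Lambda)}(K^\bullet,I^\bullet)\to\mathrm{Hom}_{\mathbf{K}(\Lambda)}(\sigma K^\bullet,I^\bullet),$$ are isomorphisms.
   Context: Let $k$ be a field, $n\ge2$, $V$ a $k$-vector space of dimension $n+1$, $\Lambda=\bigoplus_{d\ge0}\Lambda^dV$ the exterior algebra graded by $\Lambda_d=\Lambda^dV$. $\mathcal{M}_\Lambda$ is the category of finitely generated graded right $\Lambda$-modules; $N(a)_i=N_{a+i}$; $N^\vee_i=(N_{-i})^*$, so $\Lambda^\vee_i=\Lambda^{-i}V^*$. A free module is a finite direct sum of modules $\Lambda^\vee(a)$. $\mathbf{C}(\Lambda)$ and $\mathbf{K}(\Lambda)$ are the category of complexes in $\mathcal{M}_\Lambda$ and its homotopy category. For $N$ in $\mathcal{M}_\Lambda$ and $d\in\mathbb{Z}$, $N_{\le d}$ (resp. $N_{\ge d}$) denotes the submodule generated by the homogeneous elements of degree $\le d$ (resp. $\ge d$). For a complex $I^\bullet$ of free modules, $F_jI^p:=I^p_{\le j-p-n-1}$ (if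 $I^p=\bigoplus_iH^i_{p-i}\otimes\Lambda^\vee(p-i)$ then $F_jI^p=\bigoplus_{i\le j}H^i_{p-i}\otimes\Lambda^\vee(p-i)$); $F_0I^\bullet=0$ means $F_0I^p=0$ for all $p$. For a complex $K^\bullet$, $\sigma K^\bullet$ is the subcomplex with $\sigma K^p=K^p_{\ge -p}$. *)

(* Defs.v *)
From HB Require Import structures.
From mathcomp Require Import all_boot all_order all_algebra.
Set Implicit Arguments. Unset Strict Implicit. Unset Printing Implicit Defensive.
Import Order.TTheory GRing.Theory Num.Theory.
Local Open Scope ring_scope.

(* Throughout: k a field, V = k^(n+1) with basis e_0, ..., e_n (indexed by
   'I_n.+1), Lambda = exterior algebra of V, graded with e_j in degree 1.
   A graded right Lambda-module is the same as a family of k-vector spaces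
   N_d (d : int) with linear maps (right multiplication by e_j)
   N_d -> N_(d+1) satisfying x e_j e_j = 0 and x e_j e_l + x e_l e_j = 0,
   since Lambda is presented by the generators e_j and these relations. *)

Section Graded.
Variables (k : fieldType) (n : nat).

Record gdata := GData {
  gpiece : int -> vectType k;
  gact : 'I_n.+1 -> forall d : int, 'Hom(gpiece d, gpiece (d + 1))
}.

(* bounded : only finitely many nonzero graded pieces (all are finite
   dimensional), i.e. finitely generated (= finite dimensional over k). *)
Definition is_gmod (N : gdata) : Prop :=
  [/\ exists a b : int, forall d, ~~ (a <= d <= b) ->
          forall x : gpiece N d, x = 0,
      forall j d (x : gpiece N d),
          gact N j (d + 1) (gact N j d x) = 0
    & forall j l d (x : gpiece N d),
          gact N l (d + 1) (gact N j d x) + gact N j (d + 1) (gact N l d x) = 0].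

Definition is_gmor (M N : gdata) (f : forall d, 'Hom(gpiece M d, gpiece N d)) :=
  forall j d (x : gpiece M d), f (d + 1) (gact M j d x) = gact N j d (f d x).

(* N_{<= d} = 0 : the submodule generated by homogeneous elements of degree
   <= d vanishes, i.e. all those generators vanish *)
Definition le_zero (N : gdata) (d : int) : Prop :=
  forall e, e <= d -> forall x : gpiece N e, x = 0.

(* Lambda^vee(a)_i = (Lambda^{-(a+i)} V)^*, realised as functions on the
   subsets S of {0..n} with #|S| = -(a+i) (coordinates on the basis e_S);
   the right action is (phi . x)(w) = phi(x /\ w), so that
   (phi . e_j)(e_S) = 0 if j \in S, and sign * phi(e_(S + j)) otherwise, with
   e_j /\ e_S = (-1)^#{l in S | l < j} e_(S+j).
   A finite direct sum  (+)_t Lambda^vee(s_t)  is realised on functions of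
   pairs (t, S). *)
Definition fidx (s : seq int) := ('I_(size s) * {set 'I_n.+1})%type.
Definition fW (s : seq int) := {ffun fidx s -> k^o}.

Definition fdelta (s : seq int) (ts : fidx s) : fW s :=
  [ffun u => ((u == ts)%:R : k^o)].

Definition fU (s : seq int) (i : int) : {vspace fW s} :=
  <<[seq fdelta ts | ts <- enum [pred ts : fidx s |
        (#|ts.2|%:Z == - (s`_(ts.1) + i))]]>>%VS.

Definition factW (s : seq int) (j : 'I_n.+1) (phi : fW s) : fW s :=
  [ffun ts : fidx s => if j \in ts.2 then 0
     else (((-1) ^+ #|[set l in ts.2 | (l < j)%N]| : k) * phi (ts.1, j |: ts.2) : k^o)].

Definition fpiece (s : seq int) (i : int) : vectType k := subvs_of (fU s i).

Definition fact (s : seq int) (j : 'I_n.+1) (i : int) :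
  'Hom(fpiece s i, fpiece s (i + 1)) :=
  linfun (fun u : subvs_of (fU s i) => vsproj (fU s (i + 1)) (factW j (vsval u))).

Definition is_free (N : gdata) : Prop :=
  exists s : seq int, exists phi : forall i, 'Hom(gpiece N i, fpiece s i),
    (forall i, bijective (phi i)) /\
    (forall j i (x : gpiece N i), phi (i + 1) (gact N j i x) = fact s j i (phi i x)).

Record cdata := CData {
  cobj : int -> gdata;
  cdiff : forall p d, 'Hom(gpiece (cobj p) d, gpiece (cobj (p + 1)) d)
}.

Definition is_complex (K : cdata) : Prop :=
  [/\ forall p, is_gmod (cobj K p),
      forall p, is_gmor (cdiff K p)
    & forall p d (x : gpiece (cobj K p) d), cdiff K (p + 1) d (cdiff K p d x) = 0].

Definition cbounded (K : cdata) : Prop :=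
  exists a b : int, forall p, ~~ (a <= p <= b) ->
    forall d (x : gpiece (cobj K p) d), x = 0.

Definition cmap (K L : cdata) :=
  forall p d, 'Hom(gpiece (cobj K p) d, gpiece (cobj L p) d).

Definition is_chain (K L : cdata) (f : cmap K L) : Prop :=
  (forall p, is_gmor (f p)) /\
  forall p d (x : gpiece (cobj K p) d),
    f (p + 1) d (cdiff K p d x) = cdiff L p d (f p d x).

Definition homotopic (K L : cdata) (f g : cmap K L) : Prop :=
  exists h : forall p d, 'Hom(gpiece (cobj K (p + 1)) d, gpiece (cobj L p) d),
    (forall p, is_gmor (h p)) /\
    forall p d (x : gpiece (cobj K (p + 1)) d),
      f (p + 1) d x - g (p + 1) d x
        = cdiff L p d (h p d x) + h (p + 1) d (cdiff K (p + 1) d x).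

(* F_j I^p = I^p_{<= j - p - n - 1} ; F_j I = 0 *)
Definition F_zero (I : cdata) (j : int) : Prop :=
  forall p, le_zero (cobj I p) (j - p - n%:Z - 1).

(* sigma K : sigma K^p = K^p_{>= -p}, the submodule generated by the elements
   of degree >= -p; since Lambda is nonnegatively graded its degree-d piece is
   K^p_d for d >= -p and 0 otherwise. *)
Definition sigU (K : cdata) (p d : int) : {vspace gpiece (cobj K p) d} :=
  if - p <= d then fullv else 0%VS.

Definition sigma (K : cdata) : cdata :=
  @CData (fun p => @GData (fun d => subvs_of (sigU K p d))
            (fun j d => linfun (fun u : subvs_of (sigU K p d) =>
                 vsproj (sigU K p (d + 1)) (gact (cobj K p) j d (vsval u)))))
        (fun p d => linfun (fun u : subvs_of (sigU K p d) =>
                 vsproj (sigU K (p + 1) d) (cdiff K p d (vsval u)))).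

Definition sig_incl (K : cdata) (p d : int) :
  'Hom(gpiece (cobj (sigma K) p) d, gpiece (cobj K p) d) :=
  linfun (fun u : subvs_of (sigU K p d) => vsval u).

Definition restr (K L : cdata) (f : cmap K L) : cmap (sigma K) L :=
  fun p d => (f p d \o sig_incl K p d)%VF.

End Graded.

(* Main.v *)
Require Import Defs.
From HB Require Import structures.
From mathcomp Require Import all_boot all_order all_algebra.
From mathcomp Require Import zify.
From Stdlib Require Import ClassicalEpsilon.
Import Order.TTheory GRing.Theory Num.Theory.
Local Open Scope ring_scope.
Set Implicit Arguments. Unset Strict Implicit.


Lemma linfunP (k : fieldType) (aT rT : vectType k) (f : aT -> rT) :
  linear f -> forall x, linfun f x = f x.
Proof.
move=> lf x.
pose F : {linear aT -> rT} := HB.pack f (GRing.isLinear.Build k aT rT *:%R f lf).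
exact: (lfunE F x).
Qed.

Definition ltord (n : nat) (a b : 'I_n) := (a < b)%N.

Lemma ltord_trans n : transitive (@ltord n).
Proof. by move=> a b c; rewrite /ltord; apply: ltn_trans. Qed.

Lemma sorted_ord (n : nat) : sorted (@ltord n) (enum 'I_n).
Proof. by have := iota_ltn_sorted 0 n; rewrite -val_enum_ord sorted_map. Qed.

Lemma card_countE (n : nat) (A : {pred 'I_n}) : #|A| = count (mem A) (enum 'I_n).
Proof. by rewrite cardE /enum_mem size_filter count_filter; apply: eq_count => x; rewrite /= andbT. Qed.

Definition lst (n : nat) (S : {set 'I_n}) := [seq i <- enum 'I_n | i \in S].

Lemma size_lst n (S : {set 'I_n}) : size (lst S) = #|S|.
Proof. by rewrite /lst size_filter card_countE. Qed.

Lemma mem_lst n (S : {set 'I_n}) x : (x \in lst S) = (x \in S).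
Proof. by rewrite /lst mem_filter mem_enum andbT. Qed.

Lemma set_lst n (S : {set 'I_n}) : [set x in lst S] = S.
Proof. by apply/setP => x; rewrite inE mem_lst. Qed.

Lemma sorted_lst n (S : {set 'I_n}) : sorted (@ltord n) (lst S).
Proof. exact: (sorted_filter (@ltord_trans n)) (sorted_ord n). Qed.

Lemma supp_step (m : nat) (a d : int) : (m.+1)%:Z != - (a + d) -> m%:Z != - (a + (d + 1)).
Proof. apply: contra => /eqP E; apply/eqP; lia. Qed.

Lemma supp0 (a c d : int) : c <= - a -> d < c -> (0%N)%:Z != - (a + d).
Proof. move=> H1 H2; apply/eqP; lia. Qed.

Unset Implicit Arguments.
Section Core.
Variables (k : fieldType) (n : nat) (s : seq int) (M N : gdata k n).
Variable coord : forall d, fidx n s -> gpiece M d -> k.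
Hypothesis coord_lin : forall d ts (a : k) y z,
  coord d ts (a *: y + z) = a * coord d ts y + coord d ts z.
Hypothesis coord_faithful : forall d y, (forall ts, coord d ts y = 0) -> y = 0.
Hypothesis coord_act : forall j d t S y,
  coord (d + 1) (t, S) (gact M j d y) =
  if j \in S then 0 else (-1) ^+ #|[set l in S | (l < j)%N]| * coord d (t, j |: S) y.
Hypothesis coord_supp : forall d (t : 'I_(size s)) (S : {set 'I_n.+1}) (y : gpiece M d),
  #|S|%:Z != - (s`_t + d) -> coord d (t, S) y = 0.

Lemma coord0 d ts : coord d ts 0 = 0.
Proof.
have := coord_lin d ts (-1) 0 0.
by rewrite scaler0 addr0 mulN1r addNr.
Qed.

Lemma coordB d ts y z : coord d ts (y - z) = coord d ts y - coord d ts z.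
Proof. by rewrite addrC -scaleN1r coord_lin mulN1r addrC. Qed.

Lemma coord_inj d y z : (forall ts, coord d ts y = coord d ts z) -> y = z.
Proof.
move=> H; apply/eqP; rewrite -subr_eq0; apply/eqP/coord_faithful => ts.
by rewrite coordB H subrr.
Qed.

Fixpoint cev (t : 'I_(size s)) (l : seq 'I_n.+1) : forall d, gpiece M d -> k :=
  match l with
  | [::] => fun d y => coord d (t, set0) y
  | j :: l' => fun d y => cev t l' (d + 1) (gact M j d y)
  end.

Lemma cev_sorted t l : sorted (@ltord _) l -> forall d y,
  cev t l d y = coord d (t, [set x in l]) y.
Proof.
elim: l => [|a l IH] /= Hs d y.
  by congr (coord _ (_, _) _); apply/setP => x; rewrite !inE.
have Hl := path_sorted Hs.
have Hall := order_path_min (@ltord_trans _) Hs.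
rewrite IH // coord_act.
have -> : (a \in [set x in l]) = false.
  rewrite inE; apply/negP => /(allP Hall); by rewrite /ltord ltnn.
have -> : [set l0 in [set x in l] | (l0 < a)%N] = set0.
  apply/setP => x; rewrite !inE; apply/negP => /andP [/(allP Hall)].
  by rewrite /ltord => /ltn_trans H /H; rewrite ltnn.
rewrite cards0 expr0 mul1r; congr (coord _ (_, _) _).
by apply/setP => x; rewrite !inE.
Qed.

Section Ev.
Variable g : forall d, 'Hom(gpiece N d, gpiece M d).

Fixpoint ev (t : 'I_(size s)) (l : seq 'I_n.+1) : forall d, gpiece N d -> k :=
  match l with
  | [::] => fun d x => coord d (t, set0) (g d x)
  | j :: l' => fun d x => ev t l' (d + 1) (gact N j d x)
  end.

Lemma ev_lin t l d a x y : ev t l d (a *: x + y) = a * ev t l d x + ev t l d y.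
Proof.
elim: l d x y => [|j l IH] d x y /=; first by rewrite linearP coord_lin.
by rewrite linearP IH.
Qed.

Lemma ev0 t l d : ev t l d 0 = 0.
Proof. by have := ev_lin t l d (-1) 0 0; rewrite scaler0 addr0 mulN1r addNr. Qed.

Lemma evN t l d x : ev t l d (- x) = - ev t l d x.
Proof. by rewrite -scaleN1r -[_ *: x]addr0 ev_lin ev0 addr0 mulN1r. Qed.

Lemma ev_cev t d0 :
  (forall d, d0 <= d -> forall j x, g (d + 1) (gact N j d x) = gact M j d (g d x)) ->
  forall l d, d0 <= d -> forall x, ev t l d x = cev t l d (g d x).
Proof.
move=> Hg; elim=> [|j l IH] d Hd x //=.
rewrite IH ?Hg //; lia.
Qed.

Lemma ev_supp (t : 'I_(size s)) (l : seq 'I_n.+1) d (x : gpiece N d) : (size l)%:Z != - (s`_t + d) -> ev t l d x = 0.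
Proof.
elim: l d x => [|j l IH] d x /=.
  by move=> H; apply: coord_supp; rewrite cards0.
by move=> H; apply: IH; apply: supp_step.
Qed.

End Ev.

Lemma ev_agree (c : int) (g g' : forall d, 'Hom(gpiece N d, gpiece M d)) (t : 'I_(size s)) :
  c <= - s`_t -> (forall d, c <= d -> g d = g' d) ->
  forall (l : seq 'I_n.+1) d (x : gpiece N d), ev g t l d x = ev g' t l d x.
Proof.
move=> Ht Hgg; elim=> [|j l IH] d x /=; last exact: IH.
case: (lerP c d) => Hd; first by rewrite Hgg.
by rewrite !coord_supp // cards0; apply: (supp0 Ht Hd).
Qed.

Lemma uniq_core (c : int) (f f' : forall d, 'Hom(gpiece N d, gpiece M d)) :
  (forall t : 'I_(size s), c <= - s`_t) ->
  is_gmor f -> is_gmor f' -> (forall d, c <= d -> f d = f' d) ->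
  forall d, f d = f' d.
Proof.
move=> Ht Hf Hf' Hff d; apply/lfunP => x; apply: coord_inj => -[t S].
rewrite -(set_lst S) -!cev_sorted ?sorted_lst //.
rewrite -(ev_cev f t d (fun d1 _ j x1 => Hf j d1 x1)) ?lexx //.
rewrite -(ev_cev f' t d (fun d1 _ j x1 => Hf' j d1 x1)) ?lexx //.
exact: ev_agree (Ht t) Hff _ _ _.
Qed.

Section Ext.
Hypothesis coord_ex : forall d (psi : fidx n s -> k), exists y : gpiece M d,
  forall (t : 'I_(size s)) (S : {set 'I_n.+1}), #|S|%:Z = - (s`_t + d) -> coord d (t, S) y = psi (t, S).
Hypothesis HNsq : forall j d (x : gpiece N d),
  gact N j (d + 1) (gact N j d x) = 0.
Hypothesis HNac : forall j l d (x : gpiece N d),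
  gact N l (d + 1) (gact N j d x) + gact N j (d + 1) (gact N l d x) = 0.
Variable g : forall d, 'Hom(gpiece N d, gpiece M d).

Lemma ev_swap (t : 'I_(size s)) (pre : seq 'I_n.+1) a b post d (x : gpiece N d) :
  ev g t (pre ++ a :: b :: post) d x = - ev g t (pre ++ b :: a :: post) d x.
Proof.
elim: pre d x => [|c pre IH] d x /=; last exact: IH.
have /eqP := HNac a b d x; rewrite addr_eq0 => /eqP ->.
by rewrite evN.
Qed.

Lemma ev_sq (t : 'I_(size s)) (pre : seq 'I_n.+1) a post d (x : gpiece N d) : ev g t (pre ++ a :: a :: post) d x = 0.
Proof.
elim: pre d x => [|c pre IH] d x /=; last exact: IH.
by rewrite HNsq ev0.
Qed.

Lemma ev_ins (t : 'I_(size s)) (j : 'I_n.+1) (S : {set 'I_n.+1}) : j \notin S -> forall r, sorted (@ltord _) r -> j \in r ->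
  forall pre d x,
  ev g t (pre ++ j :: [seq i <- r | i \in S]) d x =
  (-1) ^+ (count (fun l => (l \in S) && ltord l j) r) *
  ev g t (pre ++ [seq i <- r | i \in j |: S]) d x.
Proof.
move=> hjS; elim=> [|a r IH] // Hs Hj pre d x.
have Hr := path_sorted Hs.
have Hall := order_path_min (@ltord_trans _) Hs.
rewrite in_cons in Hj; case: (eqVneq j a) Hj => [Eja _ | hja /= Hjr].
  subst a.
  rewrite /= (negbTE hjS) !inE eqxx /= add0n.
  have -> : [seq i <- r | i \in j |: S] = [seq i <- r | i \in S].
    apply: eq_in_filter => y /(allP Hall) hy; rewrite !inE.
    suff -> : (y == j) = false by [].
    by apply/negP => /eqP E; move: hy; rewrite E /ltord ltnn.
  have -> : count (fun l => (l \in S) && ltord l j) r = 0%N.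
    rewrite -(count_pred0 r); apply: eq_in_count.
    move=> y /(allP Hall); rewrite /ltord /= => hy; apply/negP => /andP [_ h].
    by move: (ltn_trans hy h); rewrite ltnn.
  by rewrite expr0 mul1r.
have haj : ltord a j by apply: (allP Hall).
have haS' : (a \in j |: S) = (a \in S) by rewrite !inE eq_sym (negbTE hja).
rewrite haS' haj andbT.
case: (boolP (a \in S)) => haS /=.
  rewrite ev_swap -cat_rcons IH // -cats1 -catA /= add1n exprS mulN1r mulNr.
  by [].
by rewrite IH // add0n.
Qed.

Lemma ev_ins2 (t : 'I_(size s)) (j : 'I_n.+1) (S : {set 'I_n.+1}) : j \in S -> forall r, sorted (@ltord _) r -> j \in r ->
  forall pre d x, ev g t (pre ++ j :: [seq i <- r | i \in S]) d x = 0.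
Proof.
move=> hjS; elim=> [|a r IH] // Hs Hj pre d x.
have Hr := path_sorted Hs.
have Hall := order_path_min (@ltord_trans _) Hs.
rewrite in_cons in Hj; case: (eqVneq j a) Hj => [Eja _ | hja /= Hjr].
  by subst a; rewrite /= hjS ev_sq.
case: (boolP (a \in S)) => haS /=; last exact: IH.
by rewrite ev_swap -cat_rcons IH // oppr0.
Qed.

Variable c : int.
Hypothesis Ht : forall t : 'I_(size s), c <= - s`_t.
Hypothesis Hg : forall d, c <= d -> forall j x,
  g (d + 1) (gact N j d x) = gact M j d (g d x).

Definition psiF d (x : gpiece N d) : fidx n s -> k :=
  fun ts => ev g ts.1 (lst ts.2) d x.

Definition extf d (x : gpiece N d) : gpiece M d :=
  proj1_sig (constructive_indefinite_description _ (coord_ex d (psiF d x))).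

Lemma coord_extf d (x : gpiece N d) (t : 'I_(size s)) (S : {set 'I_n.+1}) : coord d (t, S) (extf d x) = ev g t (lst S) d x.
Proof.
case: (eqVneq (#|S|%:Z) (- (s`_t + d))) => H.
  exact: (proj2_sig (constructive_indefinite_description _ (coord_ex d (psiF d x)))).
by rewrite coord_supp // ev_supp // size_lst.
Qed.

Lemma extf_lin d : linear (extf d).
Proof.
move=> a x y; apply: coord_inj => -[t S].
by rewrite coord_lin !coord_extf ev_lin.
Qed.

Definition ext d : 'Hom(gpiece N d, gpiece M d) := linfun (extf d).

Lemma extE d x : ext d x = extf d x.
Proof. exact: linfunP (@extf_lin d) x. Qed.

Lemma ext_mor : is_gmor ext.
Proof.
move=> j d x; apply: coord_inj => -[t S].
rewrite !extE coord_act !coord_extf /=.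
have Hj : j \in enum 'I_n.+1 by rewrite mem_enum.
case: (boolP (j \in S)) => hj.
  exact: (ev_ins2 t j S hj _ (sorted_ord _) Hj [::] d x).
have := ev_ins t j S hj _ (sorted_ord _) Hj [::] d x; rewrite /= => ->.
congr (_ ^+ _ * _); rewrite card_countE; apply: eq_count => y.
by rewrite !inE.
Qed.

Lemma ext_agree d : c <= d -> ext d = g d.
Proof.
move=> Hd; apply/lfunP => x; apply: coord_inj => -[t S].
rewrite extE coord_extf (@ev_cev g t c) // cev_sorted ?sorted_lst //.
by rewrite set_lst.
Qed.

End Ext.
End Core.
Set Implicit Arguments.
Section Free.
Variables (k : fieldType) (n : nat) (s : seq int).

Lemma regZ (a b : k) : (a *: (b : k^o)) = a * b.
Proof. by []. Qed.

Definition validb (i : int) (ts : fidx n s) := #|ts.2|%:Z == - (s`_(ts.1) + i).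

Lemma memfU_supp i (phi : fW k n s) : phi \in fU k n s i ->
  forall ts, ~~ validb i ts -> phi ts = 0.
Proof.
move=> Hphi ts Hts.
pose E := enum [pred ts : fidx n s | (#|ts.2|%:Z == - (s`_(ts.1) + i))].
have HE : forall ts', ts' \in E -> validb i ts' by move=> ts'; rewrite mem_enum.
pose X := [seq fdelta k ts | ts <- E].
have := @coord_span _ _ _ (in_tuple X) phi Hphi => ->.
rewrite sum_ffunE; apply: big1 => i0 _; rewrite ffunE.
have : X`_i0 \in X by apply: mem_nth; exact: ltn_ord.
case/mapP => ts' /HE Hts' ->; rewrite ffunE.
suff -> : (ts == ts') = false by rewrite /= scaler0.
by apply/negP => /eqP Ee; move: Hts; rewrite Ee Hts'.
Qed.

Lemma memfU_in i (phi : fW k n s) :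
  (forall ts, ~~ validb i ts -> phi ts = 0) -> phi \in fU k n s i.
Proof.
move=> H.
have -> : phi = \sum_(ts | validb i ts) phi ts *: fdelta k ts.
  apply/ffunP => ts; rewrite sum_ffunE.
  case: (boolP (validb i ts)) => hv.
    rewrite (bigD1 ts) //= !ffunE eqxx regZ mulr1 big1 ?addr0 // => ts' /andP [_ hts'].
    by rewrite !ffunE eq_sym (negbTE hts') regZ mulr0.
  rewrite H // big1 // => ts' hts'; rewrite !ffunE.
  suff -> : (ts == ts') = false by rewrite regZ mulr0.
  by apply/negP => /eqP E; move: hv; rewrite E hts'.
apply: memv_suml => ts hv; apply: memvZ; apply: memv_span.
by apply: map_f; rewrite mem_enum.
Qed.

Lemma factW_lin (j : 'I_n.+1) : linear (@factW k n s j).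
Proof.
move=> a x y; apply/ffunP => ts; rewrite !ffunE.
case: ifP => _; first by rewrite scaler0 addr0.
by rewrite !regZ mulrDr mulrCA.
Qed.

Lemma supp_step2 (m : nat) (a i : int) :
  m%:Z != - (a + (i + 1)) -> (m.+1)%:Z != - (a + i).
Proof. apply: contra => /eqP E; apply/eqP; lia. Qed.

Lemma fact_in j i (u : fpiece k n s i) : factW j (vsval u) \in fU k n s (i + 1).
Proof.
apply: memfU_in => ts Hts; rewrite ffunE; case: ifP => // hj.
rewrite (memfU_supp (subvsP u)) ?mulr0 //.
rewrite /validb /= cardsU1 hj /= add1n; exact: supp_step2.
Qed.

Lemma fact_val j i (u : fpiece k n s i) : vsval (fact k s j i u) = factW j (vsval u).
Proof.
rewrite /fact linfunP; first by rewrite vsprojK // fact_in.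
by move=> a x y; rewrite linearP factW_lin linearP.
Qed.

End Free.

Lemma free_coords (k : fieldType) (n : nat) (M : gdata k n) : is_free M ->
  exists (s : seq int) (coord : forall d, fidx n s -> gpiece M d -> k),
 [/\ (forall d ts (a : k) y z, coord d ts (a *: y + z) = a * coord d ts y + coord d ts z),
     (forall d y, (forall ts, coord d ts y = 0) -> y = 0),
     (forall j d (t : 'I_(size s)) (S : {set 'I_n.+1}) y,
        coord (d + 1) (t, S) (gact M j d y) =
        if j \in S then 0 else (-1) ^+ #|[set l in S | (l < j)%N]| * coord d (t, j |: S) y),
     (forall d (t : 'I_(size s)) (S : {set 'I_n.+1}) (y : gpiece M d),
        #|S|%:Z != - (s`_t + d) -> coord d (t, S) y = 0) &
     (forall d (psi : fidx n s -> k), exists y : gpiece M d,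
        forall (t : 'I_(size s)) (S : {set 'I_n.+1}),
        #|S|%:Z = - (s`_t + d) -> coord d (t, S) y = psi (t, S))].
Proof.
case=> s [phi [Hbij Hphi]].
exists s, (fun d ts y => vsval (phi d y) ts); split.
- by move=> d ts a y z /=; rewrite !linearP /= !ffunE regZ.
- move=> d y H.
  have H0 : vsval (phi d y) = 0 by apply/ffunP => ts; rewrite H ffunE.
  have H1 : phi d y = 0 by apply: subvs_inj; rewrite H0 linear0.
  by apply: (bij_inj (Hbij d)); rewrite H1 linear0.
- by move=> j d t S y /=; rewrite Hphi fact_val ffunE.
- move=> d t S y H /=; apply: (memfU_supp (subvsP _)); exact: H.
- move=> d psi.
  pose psi' : fW k n s := [ffun ts => if validb (n:=n) (s:=s) d ts then psi ts else 0].
  have Hin : psi' \in fU k n s d.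
    by apply: memfU_in => ts /negbTE h; rewrite ffunE h.
  case: (Hbij d) => ginv _ Hc.
  exists (ginv (vsproj (fU k n s d) psi')) => t S HS /=.
  by rewrite Hc vsprojK // ffunE /validb /= HS eqxx.
Qed.

Lemma top_bound_aux (n : nat) (a c : int) : - a < c -> (- a - n%:Z - 1) + n%:Z + 1 < c.
Proof. move=> H; lia. Qed.

Lemma top_bound_aux2 (n : nat) (a : int) : (n.+1)%:Z = - (a + (- a - n%:Z - 1)).
Proof. lia. Qed.

Lemma free_top (k : fieldType) (n : nat) (M : gdata k n) (s : seq int)
  (coord : forall d, fidx n s -> gpiece M d -> k) (c : int) :
  (forall d ts (a : k) y z, coord d ts (a *: y + z) = a * coord d ts y + coord d ts z) ->
  (forall d (psi : fidx n s -> k), exists y : gpiece M d,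
        forall (t : 'I_(size s)) (S : {set 'I_n.+1}),
        #|S|%:Z = - (s`_t + d) -> coord d (t, S) y = psi (t, S)) ->
  (forall e, e + n%:Z + 1 < c -> forall x : gpiece M e, x = 0) ->
  forall t : 'I_(size s), c <= - s`_t.
Proof.
move=> Hl He HM t; case: (lerP c (- s`_t)) => // Hlt; exfalso.
pose e := - s`_t - n%:Z - 1.
have [y Hy] := He e (fun _ => 1).
have := Hy t setT; rewrite cardsT card_ord => /(_ (top_bound_aux2 _ _)).
rewrite (HM e (top_bound_aux _ Hlt) y).
have := Hl e (t, setT) (-1) 0 0; rewrite scaler0 addr0 mulN1r addNr => ->.
by move/eqP; rewrite eq_sym oner_eq0.
Qed.

Lemma free_uniq (k : fieldType) (n : nat) (M N : gdata k n) (c : int) :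
  is_free M -> (forall e, e + n%:Z + 1 < c -> forall x : gpiece M e, x = 0) ->
  forall f f' : forall d, 'Hom(gpiece N d, gpiece M d),
  is_gmor f -> is_gmor f' -> (forall d, c <= d -> f d = f' d) -> forall d, f d = f' d.
Proof.
move=> /free_coords [s [coord [Hl Hf Ha Hs He]]] HM f f' Hmf Hmf' Hff.
have Ht := free_top Hl He HM.
exact: (@uniq_core k n s M N coord Hl Hf Ha Hs c f f' Ht Hmf Hmf' Hff).
Qed.

Lemma free_ext (k : fieldType) (n : nat) (M N : gdata k n) (c : int) :
  is_free M -> (forall e, e + n%:Z + 1 < c -> forall x : gpiece M e, x = 0) ->
  (forall j d (x : gpiece N d), gact N j (d + 1) (gact N j d x) = 0) ->
  (forall j l d (x : gpiece N d),
     gact N l (d + 1) (gact N j d x) + gact N j (d + 1) (gact N l d x) = 0) ->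
  forall g : forall d, 'Hom(gpiece N d, gpiece M d),
  (forall d, c <= d -> forall j x, g (d + 1) (gact N j d x) = gact M j d (g d x)) ->
  exists f : forall d, 'Hom(gpiece N d, gpiece M d),
    is_gmor f /\ forall d, c <= d -> f d = g d.
Proof.
move=> /free_coords [s [coord [Hl Hf Ha Hs He]]] HM Hsq Hac g Hg.
have Ht := free_top Hl He HM.
exists (ext k n s M N coord He g); split.
  by eapply ext_mor; eassumption.
by move=> d Hd; eapply ext_agree; eassumption.
Qed.


Lemma ile1 (a : int) : a <= a + 1. Proof. lia. Qed.
Lemma ile2 (p : int) : - p <= - (p + 1) + 1. Proof. lia. Qed.
Lemma ile3 (p : int) : - (p + 1) <= - p + 1. Proof. lia. Qed.
Lemma ile4 (p d : int) : - p <= d -> - (p + 1) <= d. Proof. lia. Qed.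
Lemma ile5 (n : nat) (q c e : int) : c <= - q + 1 -> e + n%:Z + 1 < c ->
  e <= 0 - q - n%:Z - 1.
Proof. lia. Qed.

Section Sig.
Variables (k : fieldType) (n : nat) (K : cdata k n).

Lemma sigU_full p d (x : gpiece (cobj K p) d) : - p <= d -> x \in sigU K p d.
Proof. by move=> h; rewrite /sigU h memvf. Qed.

Lemma sig_zero p d (u : subvs_of (sigU K p d)) : d < - p -> u = 0.
Proof.
move=> h; apply: subvs_inj; rewrite linear0; apply/eqP; rewrite -memv0.
by move: (subvsP u); move: (vsval u) => v; rewrite /sigU (lt_geF h).
Qed.

Lemma sig_gactE p j d (u : subvs_of (sigU K p d)) :
  gact (cobj (sigma K) p) j d u =
  vsproj (sigU K p (d + 1)) (gact (cobj K p) j d (vsval u)).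
Proof. by rewrite /= linfunP // => a x y; rewrite !linearP. Qed.

Lemma sig_cdiffE p d (u : subvs_of (sigU K p d)) :
  cdiff (sigma K) p d u = vsproj (sigU K (p + 1) d) (cdiff K p d (vsval u)).
Proof. by rewrite /= linfunP // => a x y; rewrite !linearP. Qed.

Lemma sig_inclE p d (u : subvs_of (sigU K p d)) : sig_incl K p d u = vsval u.
Proof. by rewrite /sig_incl linfunP // => a x y; rewrite !linearP. Qed.

End Sig.

Theorem lemma3p1 (k : fieldType) (n : nat) (I K : cdata k n) :
  (2 <= n)%N ->
  is_complex I -> cbounded I -> (forall p, is_free (cobj I p)) -> F_zero I 0 ->
  is_complex K -> cbounded K ->
  (* Hom_C(K, I) -> Hom_C(sigma K, I) is bijective *)
  ((forall f f' : cmap K I, is_chain f -> is_chain f' ->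
      (forall p d, restr f p d = restr f' p d) -> forall p d, f p d = f' p d) /\
   (forall g : cmap (sigma K) I, is_chain g ->
      exists f : cmap K I, is_chain f /\ forall p d, restr f p d = g p d)) /\
  (* Hom_K(K, I) -> Hom_K(sigma K, I) is bijective *)
  ((forall f f' : cmap K I, is_chain f -> is_chain f' ->
      homotopic (restr f) (restr f') -> homotopic f f') /\
   (forall g : cmap (sigma K) I, is_chain g ->
      exists f : cmap K I, is_chain f /\ homotopic (restr f) g)).
Proof.
move=> _ [Igm Imor Icx] _ Ifree FI [Kgm Kmor Kcx] _.
have HI : forall q (c : int), c <= - q + 1 -> forall e, e + n%:Z + 1 < c ->
    forall x : gpiece (cobj I q) e, x = 0.
  by move=> q c hc e he x; apply: (FI q); apply: ile5 hc he.
have Ksq : forall p j d (x : gpiece (cobj K p) d),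
    gact (cobj K p) j (d + 1) (gact (cobj K p) j d x) = 0.
  by move=> p; case: (Kgm p).
have Kac : forall p j l d (x : gpiece (cobj K p) d),
    gact (cobj K p) l (d + 1) (gact (cobj K p) j d x) +
    gact (cobj K p) j (d + 1) (gact (cobj K p) l d x) = 0.
  by move=> p; case: (Kgm p).
have uniqI : forall q r (A B : forall d, 'Hom(gpiece (cobj K q) d, gpiece (cobj I r) d)),
    is_gmor A -> is_gmor B -> - q <= - r + 1 ->
    (forall d, - q <= d -> forall x, A d x = B d x) -> forall d x, A d x = B d x.
  move=> q r A B hA hB hqr hAB d x.
  have E : forall d, - q <= d -> A d = B d.
    by move=> d' hd'; apply/lfunP => y; apply: hAB.
  by rewrite (free_uniq (Ifree r) (HI r (- q) hqr) hA hB E).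
have extI : forall q r (phi : forall d, 'Hom(gpiece (cobj (sigma K) q) d, gpiece (cobj I r) d)),
    is_gmor phi -> - q <= - r + 1 ->
    exists F : forall d, 'Hom(gpiece (cobj K q) d, gpiece (cobj I r) d),
      is_gmor F /\ forall d, - q <= d -> F d = (phi d \o linfun (vsproj (sigU K q d)))%VF.
  move=> q r phi hphi hqr.
  apply: (free_ext (Ifree r) (HI r (- q) hqr) (Ksq q) (Kac q)).
  move=> d hd j x; rewrite !comp_lfunE !lfunE /=.
  by rewrite -hphi sig_gactE vsprojK // sigU_full.
have P1b : forall g : cmap (sigma K) I, is_chain g ->
    exists f : cmap K I, is_chain f /\ forall p d, restr f p d = g p d.
  move=> g [gm gc].
  have H := fun p => extI p p (g p) (gm p) (ile1 _).
  pose F : cmap K I := fun p => proj1_sig (constructive_indefinite_description _ (H p)).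
  have HF : forall p, is_gmor (F p) /\ forall d, - p <= d ->
      F p d = (g p d \o linfun (vsproj (sigU K p d)))%VF :=
    fun p => proj2_sig (constructive_indefinite_description _ (H p)).
  exists F; split; [split|].
  - by move=> p; case: (HF p).
  - move=> p d x.
    have := uniqI p (p + 1) (fun d => F (p + 1) d \o cdiff K p d)%VF
      (fun d => cdiff I p d \o F p d)%VF _ _ (ile2 p) _ d x.
    rewrite !comp_lfunE; apply.
    + move=> j d' y; rewrite !comp_lfunE Kmor; exact: (HF (p + 1)).1.
    + move=> j d' y; rewrite !comp_lfunE (HF p).1; exact: Imor.
    + move=> d' hd' y; rewrite !comp_lfunE (HF (p + 1)).2 ?ile4 //.
      rewrite (HF p).2 // !comp_lfunE !lfunE /=.
      by rewrite -gc sig_cdiffE vsprojK // sigU_full.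
  - move=> p d; apply/lfunP => u; rewrite /restr comp_lfunE sig_inclE.
    case: (lerP (- p) d) => hd.
      by rewrite (HF p).2 // comp_lfunE lfunE /= vsvalK.
    by rewrite (sig_zero (u : subvs_of (sigU K p d)) hd) !linear0.
split; [split|split] => //.
- move=> f f' [fm fc] [f'm f'c] E p d; apply/lfunP => x.
  apply: (uniqI p p (f p) (f' p) (fm p) (f'm p) (ile1 _)) => d' hd' y.
  have := E p d'; move/lfunP/(_ (vsproj (sigU K p d') y)).
  by rewrite /restr /= !comp_lfunE !sig_inclE vsprojK // sigU_full.
- move=> f f' [fm fc] [f'm f'c] [h [hm he]].
  have H := fun p => extI (p + 1) p (h p) (hm p) (ile3 p).
  pose Hh : forall p d, 'Hom(gpiece (cobj K (p + 1)) d, gpiece (cobj I p) d) :=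
    fun p => proj1_sig (constructive_indefinite_description _ (H p)).
  have HH : forall p, is_gmor (Hh p) /\ forall d, - (p + 1) <= d ->
      Hh p d = (h p d \o linfun (vsproj (sigU K (p + 1) d)))%VF :=
    fun p => proj2_sig (constructive_indefinite_description _ (H p)).
  exists Hh; split; first by move=> p; case: (HH p).
  move=> p d x.
  have := uniqI (p + 1) (p + 1) (fun d => f (p + 1) d - f' (p + 1) d)
    (fun d => (cdiff I p d \o Hh p d)%VF + (Hh (p + 1) d \o cdiff K (p + 1) d)%VF)
    _ _ (ile1 _) _ d x.
  rewrite !add_lfunE opp_lfunE !comp_lfunE; apply.
  + move=> j d' y; rewrite !add_lfunE !opp_lfunE fm f'm.
    by rewrite linearB.
  + move=> j d' y; rewrite !add_lfunE !comp_lfunE (HH p).1 Imor Kmor (HH (p + 1)).1.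
    by rewrite linearD.
  + move=> d' hd' y; rewrite !add_lfunE opp_lfunE !comp_lfunE.
    have := he p d' (vsproj (sigU K (p + 1) d') y).
    rewrite /restr => Hhe; rewrite !comp_lfunE !sig_inclE sig_cdiffE in Hhe.
    rewrite vsprojK in Hhe; last exact: sigU_full.
    rewrite Hhe (HH p).2 // (HH (p + 1)).2; last by apply: ile4.
    by rewrite (comp_lfunE (h p d')) (comp_lfunE (h (p + 1) d')) !lfunE.
- move=> g gch; have [f [fch fr]] := P1b g gch.
  exists f; split => //.
  exists (fun p d => 0); split.
    by move=> p j d x; rewrite !zero_lfunE linear0.
  by move=> p d x; rewrite fr subrr !zero_lfunE linear0 addr0.
Qed.
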